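(* Assume $\Sigma$, $\Sigma^\pi$, $\widehat\Sigma$ are invertible and $\|(\Sigma^\pi)^{1/2}M^\pi(\Sigma^\pi)^{-1/2}\|_2\le1$. Let $\Delta X:=N\widehat\Sigma^{-1}-\Sigma^{-1}$, $\Delta M^\pi:=\widehat M^\pi-M^\pi$, $\Delta Y^\pi:=\frac1N\sum_{n=1}^N\phi(s_n,a_n)\phi^\pi(s_n')^\top-\Sigma M^\pi$, and $\Delta W_h^\pi:=\frac1N\sum_{n=1}^N\phi(s_n,a_n)\big(Q_h^\pi(s_n,a_n)-r_n'-V_{h+1}^\pi(s_n')\big)$. Then: (1) $|E_2|\le\sum_{h=0}^H\sqrt{(\nu_0^\pi)^\top(\Sigma^\pi)^{-1}\nu_0^\pi}\,\|(\Sigma^\pi)^{1/2}\Sigma^{-1/2}\|_2\,\|\Sigma^{-1/2}\Delta W_h^\pi\|_2\Big((1+\|(\Sigma^\pi)^{1/2}\Delta M^\pi(\Sigma^\pi)^{-1/2}\|_2)^h(1+\|\Sigma^{1/2}\Delta X\Sigma^{1/2}\|_2)-1\Big)$; (2) $\|(\Sigma^\pi)^{1/2}\Delta M^\pi(\Sigma^\pi)^{-1/2}\|_2\le\sqrt{\kappa_1}\Big((1+\|\Sigma^{1/2}\Delta X\Sigma^{1/2}\|_2)(1+\|\Sigma^{-1/2}\Delta Y^\pi\Sigma^{-1/2}\|_2)-1\Big)$; (3) if $\|N^{-1}\Sigma^{-1/2}\widehat\Sigma\Sigma^{-1/2}-I\|_2\le\frac12$, then $\|\Sigma^{1/2}\Delta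 X\Sigma^{1/2}\|_2\le2\|N^{-1}\Sigma^{-1/2}\widehat\Sigma\Sigma^{-1/2}-I\|_2$. Here $E_2:=\sum_{h=0}^H\big(N(\widehat\nu_h^\pi)^\top\widehat\Sigma^{-1}-(\nu_h^\pi)^\top\Sigma^{-1}\big)\Delta W_h^\pi$.
   Context: MDP setting with $\mathcal X=\mathcal S\times\mathcal A$, target policy $\pi$, horizon $H$, initial distribution $\xi_0$, value functions $Q_h^\pi(s,a)=\mathbb E^\pi[\sum_{h'=h}^Hr(s_{h'},a_{h'})\mid s_h=s,a_h=a]$, $V_h^\pi(s)=\int Q_h^\pi(s,a)\pi(a\mid s)da$, $V_{H+1}^\pi=0$. $\phi:\mathcal X\to\mathbb R^d$, $\phi^\pi(s)=\int\phi(s,a)\pi(a\mid s)da$, $M^\pi\in\mathbb R^{d\times d}$ any matrix (in the paper, the one with $\phi(s,a)^\top M^\pi=\mathbb E[\phi^\pi(s')^\top\mid s,a]$). Data $\{(s_n,a_n,s_n',r_n')\}_{n=1}^N$, $\lambda\ge0$, $\widehat\Sigma=\lambda I+\sum_n\phi(s_n,a_n)\phi(s_n,a_n)^\top$, $\widehat M^\pi=\widehat\Sigma^{-1}\sum_n\phi(s_n,a_n)\phi^\pi(s_n')^\top$, $\nu_0^\pi=\mathbb E[\phi(s,a)\mid s\sim\xi_0,a\sim\pi(\cdot\mid s)]$, $\nu_h^\pi=((M^\pi)^\top)^h\nu_0^\pi$, $\widehat\nu_h^\pi=((\widehat M^\pi)^\top)^h\nu_0^\pi$. $\Sigma,\Sigma^\pi$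 are symmetric positive definite $d\times d$ matrices (in the paper the data covariance and the covariance of $\phi^\pi$ under an invariant distribution of the target policy), and $\kappa_1:=\mathrm{cond}(\Sigma^{-1/2}\Sigma^\pi\Sigma^{-1/2})$. *)

(* Defs.v *)
From HB Require Import structures.
From mathcomp Require Import all_boot all_order all_algebra.
From Stdlib Require Import ClassicalEpsilon.
Set Implicit Arguments. Unset Strict Implicit. Unset Printing Implicit Defensive.
Import Order.TTheory GRing.Theory Num.Theory.
Local Open Scope ring_scope.

Section Defs.
Variable R : rcfType.

Definition vnorm n (v : 'cV[R]_n) : R := Num.sqrt (\sum_i v i 0 ^+ 2).

Definition is_opnorm m n (A : 'M[R]_(m, n)) (c : R) : Prop :=
  0 <= c /\ (forall v, vnorm (A *m v) <= c * vnorm v) /\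
  (forall c', 0 <= c' -> (forall v, vnorm (A *m v) <= c' * vnorm v) -> c <= c').

Definition opnorm m n (A : 'M[R]_(m, n)) : R :=
  epsilon (inhabits 0) (is_opnorm A).

Definition posdef n (A : 'M[R]_n) : Prop :=
  A^T = A /\ forall v : 'cV[R]_n, v != 0 -> 0 < (v^T *m A *m v) 0 0.
Definition psd n (A : 'M[R]_n) : Prop :=
  A^T = A /\ forall v : 'cV[R]_n, 0 <= (v^T *m A *m v) 0 0.

Definition msqrt n (A : 'M[R]_n) : 'M[R]_n :=
  epsilon (inhabits 0) (fun P => psd P /\ P *m P = A).
Definition msqrtinv n (A : 'M[R]_n) : 'M[R]_n := invmx (msqrt A).

Definition cond n (A : 'M[R]_n) : R := opnorm A * opnorm (invmx A).

Definition mxpow n (A : 'M[R]_n) (k : nat) : 'M[R]_n := iter k (mulmx A) 1%:M.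

Variables (d N : nat) (S A : Type) (phi : S -> A -> 'cV[R]_d)
  (phipi : S -> 'cV[R]_d) (s : 'I_N -> S) (a : 'I_N -> A) (s' : 'I_N -> S)
  (r : 'I_N -> R).

Definition Sigma_hat (lam : R) : 'M[R]_d :=
  lam%:M + \sum_(n < N) phi (s n) (a n) *m (phi (s n) (a n))^T.

Definition cross_sum : 'M[R]_d := \sum_(n < N) phi (s n) (a n) *m (phipi (s' n))^T.

Definition M_hat (lam : R) : 'M[R]_d := invmx (Sigma_hat lam) *m cross_sum.

Definition nu_h (M : 'M[R]_d) (nu0 : 'cV[R]_d) (h : nat) : 'cV[R]_d :=
  mxpow M^T h *m nu0.

Definition DeltaX (lam : R) (Sigma : 'M[R]_d) : 'M[R]_d :=
  N%:R *: invmx (Sigma_hat lam) - invmx Sigma.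

Definition DeltaM (lam : R) (M : 'M[R]_d) : 'M[R]_d := M_hat lam - M.

Definition DeltaY (Sigma M : 'M[R]_d) : 'M[R]_d :=
  N%:R^-1 *: cross_sum - Sigma *m M.

Definition DeltaW (Q : nat -> S -> A -> R) (V : nat -> S -> R) (h : nat)
  : 'cV[R]_d :=
  N%:R^-1 *: \sum_(n < N) (Q h (s n) (a n) - r n - V h.+1 (s' n)) *: phi (s n) (a n).

Definition E2 (lam : R) (Sigma M : 'M[R]_d) (nu0 : 'cV[R]_d)
  (Q : nat -> S -> A -> R) (V : nat -> S -> R) (H : nat) : R :=
  \sum_(h < H.+1)
    (((N%:R *: ((nu_h (M_hat lam) nu0 h)^T *m invmx (Sigma_hat lam))
       - (nu_h M nu0 h)^T *m invmx Sigma) *m DeltaW Q V h) 0 0).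

End Defs.

(* Main.v *)
Require Import Defs.
From HB Require Import structures.
From mathcomp Require Import all_boot all_order all_algebra.
From mathcomp Require Import ring lra.
From mathcomp Require Import sesquilinear spectral complex.
From Stdlib Require Import ClassicalEpsilon.
Import Order.TTheory GRing.Theory Num.Theory.
Set Implicit Arguments. Unset Strict Implicit. Unset Printing Implicit Defensive.
Local Open Scope ring_scope.

Lemma sym_eigen (R : rcfType) n (S : 'M[R]_n.+1) : S^T = S ->
  exists (lam : R) (v : 'cV[R]_n.+1), v != 0 /\ S *m v = lam *: v.
Proof.
move=> Ssym.
pose f := real_complex R.
pose SC := map_mx f S.
have SCh : SC \is hermsymmx.
  apply: realsym_hermsym.
    apply/is_hermitianmxP; rewrite expr0 scale1r. 
    by apply/matrixP=> i j; rewrite !mxE -[in LHS]Ssym mxE.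
  by apply/mxOverP => i j; rewrite mxE; apply/complex_realP; eexists.
have /hermitian_normalmx /orthomx_spectralP SCE := SCh.
have dreal := hermitian_spectral_diag_real SCh.
set P := spectralmx SC in SCE; set dd := spectral_diag SC in SCE dreal.
have Pu : P \in unitmx by apply: spectral_unit.
pose mu := dd 0 0.
have mur : mu \is Num.real by apply: (mxOverP dreal).
exists (complex.Re mu).
have detz : \det (S - (complex.Re mu)%:M) = 0.
  apply: (@complexI R); rewrite rmorph0.
  rewrite -(@det_map_mx _ _ (real_complex R)) map_mxB /= map_scalar_mx.
  idtac.
  rewrite (_ : (_ (complex.Re mu))%:M = mu%:M); last by congr (_%:M); apply: RRe_real.
  change (\det (SC - mu%:M) = 0); rewrite SCE.
  have -> : mu%:M = invmx P *m (mu%:M) *m P.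
    by rewrite mul_mx_scalar -scalemxAl mulVmx // scalemx1.
  rewrite -mulmxBl -mulmxBr !det_mulmx -diag_const_mx -linearB /= det_diag.
  rewrite (bigD1 0) //= !mxE subrr mul0r mulr0 mul0r.
  done.
have /det0P [v vn0 vS] : \det (S - (complex.Re mu)%:M) == 0 by rewrite detz.
exists v^T; split; first by rewrite trmx_eq0.
have h : (v *m (S - (complex.Re mu)%:M))^T = 0 by rewrite vS trmx0.
rewrite trmx_mul linearB /= tr_scalar_mx Ssym mulmxBl mul_scalar_mx in h.
by apply/eqP; rewrite -subr_eq0 h.
Qed.

Definition dotr {R : rcfType} n (u v : 'cV[R]_n) : R := (u^T *m v) 0 0.

Lemma dotE {R : rcfType} n (u v : 'cV[R]_n) : dotr u v = \sum_i u i 0 * v i 0.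
Proof. by rewrite /dotr mxE; apply: eq_bigr => i _; rewrite mxE. Qed.

Lemma dotC {R : rcfType} n (u v : 'cV[R]_n) : dotr u v = dotr v u.
Proof. by rewrite !dotE; apply: eq_bigr => i _; rewrite mulrC. Qed.

Lemma dotDl {R : rcfType} n (u v w : 'cV[R]_n) : dotr (u + v) w = dotr u w + dotr v w.
Proof. by rewrite !dotE -big_split; apply: eq_bigr => i _; rewrite mxE mulrDl. Qed.

Lemma dotNl {R : rcfType} n (u w : 'cV[R]_n) : dotr (- u) w = - dotr u w.
Proof. by rewrite !dotE -sumrN; apply: eq_bigr => i _; rewrite mxE mulNr. Qed.

Lemma dotBl {R : rcfType} n (u v w : 'cV[R]_n) : dotr (u - v) w = dotr u w - dotr v w.
Proof. by rewrite dotDl dotNl. Qed.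

Lemma dotZl {R : rcfType} n (a : R) (u w : 'cV[R]_n) : dotr (a *: u) w = a * dotr u w.
Proof. by rewrite !dotE mulr_sumr; apply: eq_bigr => i _; rewrite mxE mulrA. Qed.

Lemma dotDr {R : rcfType} n (u v w : 'cV[R]_n) : dotr w (u + v) = dotr w u + dotr w v.
Proof. by rewrite ![dotr w _]dotC dotDl. Qed.
Lemma dotBr {R : rcfType} n (u v w : 'cV[R]_n) : dotr w (u - v) = dotr w u - dotr w v.
Proof. by rewrite ![dotr w _]dotC dotBl. Qed.
Lemma dotZr {R : rcfType} n (a : R) (u w : 'cV[R]_n) : dotr w (a *: u) = a * dotr w u.
Proof. by rewrite ![dotr w _]dotC dotZl. Qed.

Lemma dot_ge0 {R : rcfType} n (u : 'cV[R]_n) : 0 <= dotr u u.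
Proof. by rewrite dotE; apply: sumr_ge0 => i _; rewrite -expr2 sqr_ge0. Qed.

Lemma dot_eq0 {R : rcfType} n (u : 'cV[R]_n) : dotr u u = 0 -> u = 0.
Proof.
rewrite dotE => /eqP; rewrite psumr_eq0 => [/allP H|i _]; last by rewrite -expr2 sqr_ge0.
apply/matrixP => i j; rewrite ord1 mxE; have := H i (mem_index_enum _).
by rewrite -expr2 sqrf_eq0 => /eqP.
Qed.

Lemma dot_mull {R : rcfType} m n (A : 'M[R]_(m, n)) u v : dotr (A *m u) v = dotr u (A^T *m v).
Proof. by rewrite /dotr trmx_mul mulmxA. Qed.

Lemma dot_trmx {R : rcfType} n (u v : 'cV[R]_n) : u^T *m v = (dotr u v)%:M.
Proof. exact: mx11_scalar. Qed.

Lemma vnormE {R : rcfType} n (v : 'cV[R]_n) : vnorm v = Num.sqrt (dotr v v).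
Proof. by rewrite /vnorm dotE; congr Num.sqrt; apply: eq_bigr => i _; rewrite expr2. Qed.

Lemma vnorm_ge0 {R : rcfType} n (v : 'cV[R]_n) : 0 <= vnorm v.
Proof. by rewrite vnormE sqrtr_ge0. Qed.

Lemma vnorm_sq {R : rcfType} n (v : 'cV[R]_n) : vnorm v ^+ 2 = dotr v v.
Proof. by rewrite vnormE sqr_sqrtr // dot_ge0. Qed.

Lemma householder {R : rcfType} n (u e : 'cV[R]_n) : dotr u u = 1 -> dotr e e = 1 ->
  exists Hh : 'M[R]_n, Hh^T = Hh /\ Hh *m Hh = 1%:M /\ Hh *m e = u.
Proof.
move=> uu ee.
pose w := e - u; pose q := dotr w w; pose a := 2 / q.
exists (1%:M - a *: (w *m w^T)).
have WW : w *m w^T *m (w *m w^T) = q *: (w *m w^T).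
  by rewrite mulmxA -(mulmxA w) dot_trmx mul_mx_scalar -scalemxAl.
split; first by rewrite linearB /= tr_scalar_mx linearZ /= trmx_mul trmxK.
split.
  rewrite mulmxBl mul1mx mulmxBr mulmx1 -scalemxAl -scalemxAr WW !scalerA.
  have aq : a * a * q = a *+ 2.
    rewrite /a; have [->|q0] := eqVneq q 0; first by rewrite !invr0 !mulr0 mul0rn.
    by rewrite mulr2n; field.
  by rewrite aq -scalerMnl mulr2n opprB addrK subrK.
have c1 : dotr w e = 1 - dotr u e by rewrite /w dotBl ee.
have qE : q = 2 * (1 - dotr u e).
  by rewrite /q /w dotBl !dotBr ee uu [dotr e u]dotC; ring.
rewrite mulmxBl mul1mx -scalemxAl -mulmxA dot_trmx mul_mx_scalar scalerA.
have [q0|q0] := eqVneq q 0.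
  have w0 : w = 0 by apply: dot_eq0.
  by move: w0; rewrite /w => /eqP; rewrite subr_eq0 => /eqP <-; rewrite /a q0 invr0 mulr0 mul0r scale0r subr0.
have -> : a * dotr w e = 1.
  have h1 : 1 - dotr u e != 0 by move: q0; rewrite qE mulf_eq0 negb_or => /andP[].
  by rewrite /a c1 qE; field.
by rewrite scale1r /w opprB addrC subrK.
Qed.

Lemma vnorm_gt0 {R : rcfType} n (v : 'cV[R]_n) : v != 0 -> 0 < vnorm v.
Proof.
move=> vn0; rewrite vnormE sqrtr_gt0 lt_def dot_ge0 andbT.
by apply: contra vn0 => /eqP /dot_eq0 ->.
Qed.

Lemma block_step {R : rcfType} n
  (IH : forall S : 'M[R]_n, S^T = S -> exists (O : 'M[R]_n) (D : 'rV[R]_n),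
    O *m O^T = 1%:M /\ O^T *m O = 1%:M /\ S = O^T *m diag_mx D *m O)
  (T : 'M[R]_(1 + n)) (lam : R) :
  T^T = T -> T *m col_mx 1%:M 0 = lam *: col_mx 1%:M 0 ->
  exists (O : 'M[R]_(1 + n)) (D : 'rV[R]_(1 + n)),
    O *m O^T = 1%:M /\ O^T *m O = 1%:M /\ T = O^T *m diag_mx D *m O.
Proof.
have TE := submxK T.
rewrite -TE.
set a := ulsubmx T; set b := ursubmx T; set c := dlsubmx T; set d := drsubmx T.
rewrite tr_block_mx => /eq_block_mx [_ cb _ dsym].
rewrite mul_block_col !mulmx1 !mulmx0 !addr0 scale_col_mx scaler0.
move=> /eq_col_mx [aE c0].
have b0 : b = 0 by rewrite -cb c0 trmx0.
have [O' [D' [O1 [O2 dE]]]] := IH d dsym.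
pose Ob : 'M[R]_(1 + n) := block_mx 1%:M 0 0 O'.
have ObT : Ob^T = block_mx 1%:M 0 0 O'^T by rewrite tr_block_mx !trmx0 trmx1.
exists Ob, (row_mx (lam%:M) D').
split; [|split].
- rewrite /Ob tr_block_mx !trmx0 trmx1 mulmx_block !mulmx0 !mul0mx !mulmx1 !addr0 !add0r O1.
  by rewrite -scalar_mx_block.
- rewrite /Ob tr_block_mx !trmx0 trmx1 mulmx_block !mulmx0 !mul0mx !mulmx1 !addr0 !add0r O2.
  by rewrite -scalar_mx_block.
have dl : diag_mx (lam%:M : 'rV[R]_1) = lam *: 1%:M.
  by apply/matrixP => i j; rewrite !ord1 !mxE eqxx /= !mulr1n ?mulr1.
rewrite /Ob tr_block_mx !trmx0 trmx1 diag_mx_row dl !mulmx_block !mulmx0 !mul0mx !mulmx1 !mul1mx.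
by rewrite !addr0 !add0r mul0mx aE b0 c0 dE.
Qed.

Lemma e_dot (R : rcfType) n :
  dotr (col_mx (1%:M : 'M[R]_1) (0 : 'M_(n, 1))) (col_mx 1%:M 0) = 1.
Proof. by rewrite /dotr tr_col_mx trmx1 trmx0 mul_row_col mulmx1 mulmx0 addr0 mxE. Qed.

Lemma spectral_real {R : rcfType} n (S : 'M[R]_n) : S^T = S ->
  exists (O : 'M[R]_n) (D : 'rV[R]_n),
    O *m O^T = 1%:M /\ O^T *m O = 1%:M /\ S = O^T *m diag_mx D *m O.
Proof.
elim: n S => [|n IH] S Ssym.
  by exists 0, 0; split; [|split]; rewrite [LHS]flatmx0 [RHS]flatmx0.
have [lam [v [vn0 Sv]]] := sym_eigen Ssym.
have vpos := vnorm_gt0 vn0.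
pose u := (vnorm v)^-1 *: v.
have uu : dotr u u = 1.
  rewrite dotZl dotZr -vnorm_sq mulrA -expr2 -exprMn mulVf ?expr1n //.
  by rewrite gt_eqF.
have Su : S *m u = lam *: u by rewrite -scalemxAr Sv !scalerA mulrC.
pose e : 'cV[R]_n.+1 := col_mx (1%:M : 'M_1) (0 : 'M_(n, 1)).
have ee : dotr e e = 1 := e_dot R n.
have [Hh [Hs [HH He]]] := householder uu ee.
pose T : 'M[R]_n.+1 := Hh *m S *m Hh.
have Ts : T^T = T by rewrite /T !trmx_mul Hs Ssym mulmxA.
have Te : T *m e = lam *: e.
  have Hu : Hh *m u = e by rewrite -He mulmxA HH mul1mx.
  by rewrite /T -!mulmxA He Su -scalemxAr Hu.
have [O [D [O1 [O2 TE]]]] := block_step IH Ts Te.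
exists (O *m Hh), D.
rewrite !trmx_mul Hs; split; [|split].
- by rewrite mulmxA -(mulmxA O) HH mulmx1 O1.
- by rewrite mulmxA -(mulmxA Hh) O2 mulmx1 HH.
have -> : Hh *m O^T *m diag_mx D *m (O *m Hh) = Hh *m T *m Hh.
  by rewrite TE !mulmxA.
by rewrite /T !mulmxA HH mul1mx -mulmxA HH mulmx1.
Qed.

Lemma quad_diag {R : rcfType} n (D : 'rV[R]_n) (w : 'cV[R]_n) :
  dotr w (diag_mx D *m w) = \sum_i D 0 i * w i 0 ^+ 2.
Proof.
rewrite dotE; apply: eq_bigr => i _; rewrite mul_diag_mx mxE; ring.
Qed.

Lemma quad_O {R : rcfType} n (O : 'M[R]_n) (D : 'rV[R]_n) (v : 'cV[R]_n) :
  dotr v (O^T *m diag_mx D *m O *m v) = dotr (O *m v) (diag_mx D *m (O *m v)).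
Proof. by rewrite -!mulmxA -dot_mull. Qed.

Lemma dotO {R : rcfType} n (O : 'M[R]_n) (v : 'cV[R]_n) :
  O^T *m O = 1%:M -> dotr (O *m v) (O *m v) = dotr v v.
Proof. by move=> OO; rewrite dot_mull mulmxA OO mul1mx. Qed.

Lemma argmax_ex {R : rcfType} n (f : 'I_n.+1 -> R) : exists i, forall j, f j <= f i.
Proof.
case: (@arg_maxP _ R _ ord0 predT f isT) => i _ H.
by exists i => j; apply: H.
Qed.

Lemma delta_dot {R : rcfType} n (i : 'I_n) :
  dotr (delta_mx i 0 : 'cV[R]_n) (delta_mx i 0) = 1.
Proof.
by rewrite /dotr trmx_delta mul_delta_mx mxE.
Qed.

Lemma diag_delta {R : rcfType} n (D : 'rV[R]_n) (i : 'I_n) :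
  diag_mx D *m (delta_mx i 0 : 'cV[R]_n) = D 0 i *: delta_mx i 0.
Proof.
apply/matrixP => j k; rewrite mul_diag_mx !mxE.
by case: (eqVneq j i) => [->|ji]; rewrite ?eqxx ?mulr0 //= (negbTE ji) !mulr0.
Qed.

Lemma sym_quad_delta {R : rcfType} n (O : 'M[R]_n) (D : 'rV[R]_n) (i : 'I_n) :
  O *m O^T = 1%:M ->
  let x := O^T *m delta_mx i 0 in dotr x (O^T *m diag_mx D *m O *m x) = D 0 i.
Proof.
move=> OO x; rewrite quad_O /x mulmxA OO mul1mx diag_delta dotZr delta_dot.
by rewrite mulr1.
Qed.

Lemma psd_diag_ge0 {R : rcfType} n (S O : 'M[R]_n) (D : 'rV[R]_n) :
  O *m O^T = 1%:M -> S = O^T *m diag_mx D *m O ->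
  (forall v, 0 <= dotr v (S *m v)) -> forall i, 0 <= D 0 i.
Proof.
move=> OO SE H i; have := H (O^T *m delta_mx i 0).
by rewrite SE sym_quad_delta.
Qed.

Lemma msqrt_ex {R : rcfType} n (S : 'M[R]_n) : psd S -> exists P, psd P /\ P *m P = S.
Proof.
move=> [Ssym Spsd].
have [O [D [O1 [O2 SE]]]] := spectral_real Ssym.
have D0 : forall i, 0 <= D 0 i.
  apply: (psd_diag_ge0 O1 SE) => v; have := Spsd v.
  by rewrite /dotr mulmxA.
pose Ds := map_mx Num.sqrt D.
exists (O^T *m diag_mx Ds *m O); split; [split|].
- by rewrite !trmx_mul trmxK tr_diag_mx mulmxA.
- move=> v; have := quad_O O Ds v; rewrite /dotr -!mulmxA => ->.
  rewrite -/(dotr _ _) quad_diag; apply: sumr_ge0 => i _.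
  by rewrite mxE mulr_ge0 ?sqrtr_ge0 ?sqr_ge0.
rewrite SE -!mulmxA (mulmxA O) O1 mul1mx !mulmxA; congr (_ *m _); rewrite -mulmxA; congr (_ *m _).
apply/matrixP => i j; rewrite mul_diag_mx !mxE; case: (eqVneq i j) => [->|ij].
  by rewrite !mulr1n -expr2 sqr_sqrtr.
by rewrite !mulr0n mulr0.
Qed.

Lemma msqrtP {R : rcfType} n (S : 'M[R]_n) : psd S ->
  psd (msqrt S) /\ msqrt S *m msqrt S = S.
Proof.
move=> /msqrt_ex H; rewrite /msqrt.
exact: (epsilon_spec (inhabits 0) (fun P => psd P /\ P *m P = S) H).
Qed.

Lemma opnorm_ex {R : rcfType} m n (A : 'M[R]_(m, n)) : exists c, is_opnorm A c.
Proof.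
case: n A => [|n] A.
  exists 0; split=> //; split.
    by move=> v; rewrite [v]flatmx0 mulmx0 mul0r /vnorm big1 ?sqrtr0 // => i; rewrite mxE expr0n.
  by move=> c' c'0 _.
pose G := A^T *m A.
have Gsym : G^T = G by rewrite /G trmx_mul trmxK.
have [O [D [O1 [O2 GE]]]] := spectral_real Gsym.
have GA : forall v, dotr v (G *m v) = dotr (A *m v) (A *m v).
  by move=> v; rewrite dot_mull /G mulmxA.
have D0 : forall i, 0 <= D 0 i.
  by apply: (psd_diag_ge0 O1 GE) => v; rewrite GA dot_ge0.
have [i Hi] := argmax_ex (fun i => D 0 i).
exists (Num.sqrt (D 0 i)); split; first exact: sqrtr_ge0.
have key : forall v, dotr (A *m v) (A *m v) <= D 0 i * dotr v v.
  move=> v; rewrite -GA GE quad_O quad_diag -(dotO v O2) dotE mulr_sumr.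
  apply: ler_sum => j _; rewrite -expr2 ler_wpM2r ?sqr_ge0 //.
split.
  move=> v; rewrite !vnormE -sqrtrM ?D0 //; exact: ler_wsqrtr.
move=> c' c'0 Hc.
have := Hc (O^T *m delta_mx i 0).
have x1 : dotr (O^T *m delta_mx i 0) (O^T *m delta_mx i 0) = 1.
  by rewrite dotO ?delta_dot // trmxK.
rewrite !vnormE x1 sqrtr1 mulr1 -GA.
by rewrite GE sym_quad_delta.
Qed.

Lemma opnormP {R : rcfType} m n (A : 'M[R]_(m, n)) : is_opnorm A (opnorm A).
Proof. exact: (epsilon_spec (inhabits 0) (is_opnorm A) (opnorm_ex A)). Qed.

Lemma CS_sq {R : rcfType} n (u v : 'cV[R]_n) : dotr u v ^+ 2 <= dotr u u * dotr v v.
Proof.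
have [->|vn0] := eqVneq v 0.
  by rewrite /dotr !mulmx0 !mxE expr0n /= mulr0.
have qpos : 0 < dotr v v.
  rewrite lt_def dot_ge0 andbT; apply: contra vn0 => /eqP /dot_eq0 ->; done.
pose w := dotr v v *: u - dotr u v *: v.
have := dot_ge0 w.
rewrite /w !dotBl !dotBr !dotZl !dotZr (dotC v u) => H.
have H2 : 0 <= dotr v v * (dotr v v * dotr u u - dotr u v ^+ 2).
  by move: H; congr (_ <= _); ring.
rewrite pmulr_rge0 // subr_ge0 in H2.
by rewrite mulrC.
Qed.

Lemma CS {R : rcfType} n (u v : 'cV[R]_n) : `|dotr u v| <= vnorm u * vnorm v.
Proof.
rewrite !vnormE -sqrtrM ?dot_ge0 // -sqrtr_sqr ler_wsqrtr //; exact: CS_sq.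
Qed.

Lemma CS' {R : rcfType} n (u v : 'cV[R]_n) : dotr u v <= vnorm u * vnorm v.
Proof. exact: le_trans (ler_norm _) (CS u v). Qed.

Lemma sqr_le_ge0 {R : rcfType} (x y : R) : 0 <= y -> x ^+ 2 <= y ^+ 2 -> x <= y.
Proof.
move=> y0 H; have [x0|x0] := leP x 0; first exact: le_trans x0 y0.
by rewrite -(ler_pXn2r (_ : (0 < 2)%N)) // ?nnegrE ?ltW.
Qed.

Lemma vnormD {R : rcfType} n (u v : 'cV[R]_n) : vnorm (u + v) <= vnorm u + vnorm v.
Proof.
apply: sqr_le_ge0; first by rewrite addr_ge0 ?vnorm_ge0.
rewrite vnorm_sq dotDl !dotDr sqrrD !vnorm_sq (dotC v u).
have := CS' u v; lra.
Qed.

Lemma vnormZ {R : rcfType} n (a : R) (v : 'cV[R]_n) : vnorm (a *: v) = `|a| * vnorm v.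
Proof. by rewrite !vnormE dotZl dotZr mulrA -expr2 sqrtrM ?sqr_ge0 // sqrtr_sqr. Qed.

Lemma vnormN {R : rcfType} n (v : 'cV[R]_n) : vnorm (- v) = vnorm v.
Proof. by rewrite -scaleN1r vnormZ normrN1 mul1r. Qed.

Lemma vnorm0 {R : rcfType} n : vnorm (0 : 'cV[R]_n) = 0.
Proof. by rewrite -(scale0r (0 : 'cV[R]_n)) vnormZ normr0 mul0r. Qed.

Lemma op_ge0 {R : rcfType} m n (A : 'M[R]_(m, n)) : 0 <= opnorm A.
Proof. by case: (opnormP A). Qed.

Lemma op_bound {R : rcfType} m n (A : 'M[R]_(m, n)) v :
  vnorm (A *m v) <= opnorm A * vnorm v.
Proof. by case: (opnormP A) => _ [H _]; apply: H. Qed.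

Lemma op_min {R : rcfType} m n (A : 'M[R]_(m, n)) c : 0 <= c ->
  (forall v, vnorm (A *m v) <= c * vnorm v) -> opnorm A <= c.
Proof. by case: (opnormP A) => _ [_ H]; apply: H. Qed.

Lemma op_add {R : rcfType} m n (A B : 'M[R]_(m, n)) :
  opnorm (A + B) <= opnorm A + opnorm B.
Proof.
apply: op_min; first by rewrite addr_ge0 ?op_ge0.
move=> v; rewrite mulmxDl mulrDl; apply: le_trans (vnormD _ _) _.
by apply: lerD; apply: op_bound.
Qed.

Lemma op_opp {R : rcfType} m n (A : 'M[R]_(m, n)) : opnorm (- A) <= opnorm A.
Proof.
apply: op_min; first exact: op_ge0.
by move=> v; rewrite mulNmx vnormN op_bound.
Qed.

Lemma op_sub {R : rcfType} m n (A B : 'M[R]_(m, n)) :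
  opnorm (A - B) <= opnorm A + opnorm B.
Proof. by apply: le_trans (op_add _ _) _; rewrite lerD2l op_opp. Qed.

Lemma op_mul {R : rcfType} m n p (A : 'M[R]_(m, n)) (B : 'M[R]_(n, p)) :
  opnorm (A *m B) <= opnorm A * opnorm B.
Proof.
apply: op_min; first by rewrite mulr_ge0 ?op_ge0.
move=> v; rewrite -mulmxA; apply: le_trans (op_bound _ _) _.
by rewrite -mulrA ler_wpM2l ?op_ge0 ?op_bound.
Qed.

Lemma op_1 {R : rcfType} n : opnorm (1%:M : 'M[R]_n) <= 1.
Proof. by apply: op_min => // v; rewrite mul1mx mul1r. Qed.

Lemma op_scale {R : rcfType} m n (a : R) (A : 'M[R]_(m, n)) :
  opnorm (a *: A) <= `|a| * opnorm A.
Proof.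
apply: op_min; first by rewrite mulr_ge0 ?op_ge0.
by move=> v; rewrite -scalemxAl vnormZ -mulrA ler_wpM2l ?op_bound.
Qed.

Lemma op_tr {R : rcfType} m n (A : 'M[R]_(m, n)) : opnorm A^T <= opnorm A.
Proof.
apply: op_min; first exact: op_ge0.
move=> v.
have H : vnorm (A^T *m v) ^+ 2 <= vnorm v * (opnorm A * vnorm (A^T *m v)).
  rewrite vnorm_sq dot_mull trmxK; apply: le_trans (CS' _ _) _.
  by rewrite ler_wpM2l ?vnorm_ge0 // op_bound.
have [z|nz] := eqVneq (vnorm (A^T *m v)) 0.
  by rewrite z mulr_ge0 ?op_ge0 ?vnorm_ge0.
have pz : 0 < vnorm (A^T *m v) by rewrite lt_def nz vnorm_ge0.
rewrite expr2 mulrA ler_pM2r // in H.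
by rewrite mulrC.
Qed.

Lemma op_sq {R : rcfType} m n (A : 'M[R]_(m, n)) :
  opnorm A <= Num.sqrt (opnorm (A^T *m A)).
Proof.
apply: op_min; first exact: sqrtr_ge0.
move=> v; apply: sqr_le_ge0; first by rewrite mulr_ge0 ?sqrtr_ge0 ?vnorm_ge0.
rewrite vnorm_sq dot_mull exprMn sqr_sqrtr ?op_ge0 //.
apply: le_trans (CS' _ _) _.
rewrite expr2 mulrCA ler_wpM2l ?vnorm_ge0 //.
by rewrite mulmxA op_bound.
Qed.

Lemma inv_uniq {R : rcfType} n (A B : 'M[R]_n) : A *m B = 1%:M -> invmx A = B.
Proof.
move=> AB; have [Au _] := mulmx1_unit AB.
by rewrite -[invmx A]mulmx1 -AB mulmxA mulVmx // mul1mx.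
Qed.

Lemma posdef_psd {R : rcfType} n (S : 'M[R]_n) : posdef S -> psd S.
Proof.
move=> [Ss Sp]; split=> // v; have [->|vn0] := eqVneq v 0.
  by rewrite mulmx0 mxE.
exact: ltW (Sp v vn0).
Qed.

Lemma posdef_unit {R : rcfType} n (S : 'M[R]_n) : posdef S -> S \in unitmx.
Proof.
move=> [Ss Sp]; rewrite unitmxE unitfE; apply/negP => /det0P [w wn0 wS].
have := Sp w^T; rewrite trmx_eq0 => /(_ wn0); rewrite trmxK wS mul0mx mxE.
by rewrite ltxx.
Qed.

Lemma sqrt_facts {R : rcfType} n (S : 'M[R]_n) : posdef S ->
  [/\ (msqrt S)^T = msqrt S, msqrt S *m msqrt S = S,
      (msqrtinv S)^T = msqrtinv S,
      msqrtinv S *m msqrt S = 1%:M /\ msqrt S *m msqrtinv S = 1%:M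
    & msqrtinv S *m msqrtinv S = invmx S].
Proof.
move=> Spd; have Su := posdef_unit Spd.
have [[Ps _] PP] := msqrtP (posdef_psd Spd).
have Pu : msqrt S \in unitmx by move: Su; rewrite -{1}PP unitmx_mul => /andP[].
split=> //.
- by rewrite /msqrtinv trmx_inv Ps.
- by rewrite /msqrtinv mulVmx // mulmxV.
symmetry; apply: inv_uniq; rewrite /msqrtinv -{1}PP -mulmxA.
by rewrite (mulmxA (msqrt S) (invmx (msqrt S))) mulmxV // mul1mx mulmxV.
Qed.

Lemma mxpowS {R : rcfType} n (A : 'M[R]_n) h : mxpow A h.+1 = A *m mxpow A h.
Proof. by []. Qed.

Lemma mxpowSr {R : rcfType} n (A : 'M[R]_n) h : mxpow A h.+1 = mxpow A h *m A.
Proof.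
elim: h => [|h IH]; first by rewrite /mxpow /= mulmx1 mul1mx.
by rewrite mxpowS {1}IH mulmxA -mxpowS.
Qed.

Lemma mxpow_tr {R : rcfType} n (A : 'M[R]_n) h : (mxpow A^T h)^T = mxpow A h.
Proof.
elim: h => [|h IH]; first by rewrite /mxpow /= trmx1.
by rewrite mxpowS trmx_mul IH trmxK mxpowSr.
Qed.

Lemma mxpow_conj {R : rcfType} n (Pi Ph K : 'M[R]_n) h :
  Pi *m Ph = 1%:M -> Ph *m Pi = 1%:M ->
  mxpow (Pi *m K *m Ph) h = Pi *m mxpow K h *m Ph.
Proof.
move=> PP1 PP2; elim: h => [|h IH]; first by rewrite /mxpow /= mulmx1.
by rewrite mxpowS IH !mulmxA -(mulmxA _ Ph Pi) PP2 mulmx1.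
Qed.

Lemma op_pow {R : rcfType} n (B : 'M[R]_n) h : opnorm B <= 1 -> opnorm (mxpow B h) <= 1.
Proof.
move=> B1; elim: h => [|h IH]; first exact: op_1.
rewrite mxpowS; apply: le_trans (op_mul _ _) _.
by rewrite -(mulr1 1) ler_pM ?op_ge0.
Qed.

Lemma pow_diff {R : rcfType} n (B D : 'M[R]_n) h : opnorm B <= 1 ->
  opnorm (mxpow (B + D) h - mxpow B h) <= (1 + opnorm D) ^+ h - 1.
Proof.
move=> B1; elim: h => [|h IH].
  rewrite /mxpow /= subrr expr0 subrr; apply: op_min => // v.
  by rewrite mul0mx vnorm0 mul0r.
have -> : mxpow (B + D) h.+1 - mxpow B h.+1
   = (B + D) *m (mxpow (B + D) h - mxpow B h) + D *m mxpow B h.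
  by rewrite !mxpowS mulmxBr !mulmxDl opprD addrA subrK.
apply: le_trans (op_add _ _) _.
have BD : opnorm (B + D) <= 1 + opnorm D.
  by apply: le_trans (op_add _ _) _; rewrite lerD2r.
have h1 : opnorm ((B + D) *m (mxpow (B + D) h - mxpow B h))
   <= (1 + opnorm D) * ((1 + opnorm D) ^+ h - 1).
  by apply: le_trans (op_mul _ _) _; apply: ler_pM; rewrite ?op_ge0.
have h2 : opnorm (D *m mxpow B h) <= opnorm D.
  apply: le_trans (op_mul _ _) _; rewrite -[X in _ <= X]mulr1.
  by rewrite ler_wpM2l ?op_ge0 ?op_pow.
apply: le_trans (lerD h1 h2) _; rewrite exprS; lra.
Qed.

Lemma op_mul3 {R : rcfType} m n p q (A : 'M[R]_(m, n)) (B : 'M[R]_(n, p)) (C : 'M[R]_(p, q)) :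
  opnorm (A *m B *m C) <= opnorm A * opnorm B * opnorm C.
Proof.
apply: le_trans (op_mul _ _) _; rewrite ler_wpM2r ?op_ge0 //; exact: op_mul.
Qed.

Lemma op_mul4 {R : rcfType} m n p q r (A : 'M[R]_(m, n)) (B : 'M[R]_(n, p))
  (C : 'M[R]_(p, q)) (D : 'M[R]_(q, r)) :
  opnorm (A *m B *m C *m D) <= opnorm A * opnorm B * opnorm C * opnorm D.
Proof.
apply: le_trans (op_mul _ _) _; rewrite ler_wpM2r ?op_ge0 //; exact: op_mul3.
Qed.

Lemma part3 {R : rcfType} n (X E : 'M[R]_n) :
  (1%:M + E) *m (1%:M + X) = 1%:M -> opnorm E <= 2^-1 -> opnorm X <= 2 * opnorm E.
Proof.
move=> H e2.
have h0 : X + (E + E *m X) = 0.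
  apply: (@addrI _ 1%:M).
  by rewrite addr0 addrA -[in RHS]H mulmxDl !mul1mx mulmxDr mulmx1.
have XE : X = - (E + E *m X).
  by rewrite -{1}(addrK (E + E *m X) X) h0 sub0r.
have e0 := op_ge0 E.
apply: op_min; first by rewrite mulr_ge0.
move=> v.
have Hv : vnorm (X *m v) <= opnorm E * vnorm v + opnorm E * vnorm (X *m v).
  rewrite {1}XE mulNmx vnormN mulmxDl -mulmxA.
  by apply: le_trans (vnormD _ _) _; apply: lerD; apply: op_bound.
have a0 := vnorm_ge0 (X *m v); have b0 := vnorm_ge0 v.
nra.
Qed.

Lemma part2 {R : rcfType} n (C C' X Y B Dm : 'M[R]_n) (k : R) :
  Dm = C *m Y *m C' + C *m X *m C' *m B + C *m X *m Y *m C' ->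
  opnorm B <= 1 -> opnorm C * opnorm C' <= k ->
  opnorm Dm <= k * ((1 + opnorm X) * (1 + opnorm Y) - 1).
Proof.
move=> -> B1 Ck.
have c0 := op_ge0 C; have c'0 := op_ge0 C'; have x0 := op_ge0 X; have y0 := op_ge0 Y.
have b0 := op_ge0 B.
have h1 := op_mul3 C Y C'.
have h2 := op_mul4 C X C' B.
have h3 := op_mul4 C X Y C'.
have h2' : opnorm C * opnorm X * opnorm C' * opnorm B <= opnorm C * opnorm X * opnorm C'.
  by rewrite -[X in _ <= X]mulr1 ler_wpM2l ?mulr_ge0.
have K0 : 0 <= opnorm C * opnorm C' by rewrite mulr_ge0.
have e1 : opnorm (C *m Y *m C' + C *m X *m C' *m B + C *m X *m Y *m C')
   <= opnorm C * opnorm C' * (opnorm X + opnorm Y + opnorm X * opnorm Y).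
  apply: le_trans (op_add _ _) _; apply: le_trans (lerD (op_add _ _) (lexx _)) _.
  have -> : opnorm C * opnorm C' * (opnorm X + opnorm Y + opnorm X * opnorm Y)
    = opnorm C * opnorm Y * opnorm C' + opnorm C * opnorm X * opnorm C'
      + opnorm C * opnorm X * opnorm Y * opnorm C' by ring.
  by apply: lerD; [apply: lerD|]; [exact: h1|exact: le_trans h2 h2'|exact: h3].
apply: le_trans e1 _.
have -> : (1 + opnorm X) * (1 + opnorm Y) - 1 = opnorm X + opnorm Y + opnorm X * opnorm Y by ring.
by rewrite ler_wpM2r // addr_ge0 ?mulr_ge0 ?addr_ge0.
Qed.

Lemma part1 {R : rcfType} n (a b : 'cV[R]_n) (B Dm C X : 'M[R]_n) h :
  opnorm B <= 1 ->
  `| dotr a ((mxpow (B + Dm) h *m C *m (1%:M + X) - mxpow B h *m C) *m b) |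
  <= vnorm a * opnorm C * vnorm b * ((1 + opnorm Dm) ^+ h * (1 + opnorm X) - 1).
Proof.
move=> B1.
set Z := _ - _.
have ZE : Z = (mxpow (B + Dm) h - mxpow B h) *m C *m (1%:M + X) + mxpow B h *m C *m X.
  rewrite /Z !mulmxBl [mxpow B h *m C *m (1%:M + X)]mulmxDr mulmx1.
  by rewrite opprD addrA subrK.
have c0 := op_ge0 C; have x0 := op_ge0 X; have dm0 := op_ge0 Dm.
have pk0 : 0 <= (1 + opnorm Dm) ^+ h - 1.
  by rewrite subr_ge0 exprn_ege1 // lerDl.
have ZB : opnorm Z <= opnorm C * ((1 + opnorm Dm) ^+ h * (1 + opnorm X) - 1).
  rewrite ZE; apply: le_trans (op_add _ _) _.
  have t1 : opnorm ((mxpow (B + Dm) h - mxpow B h) *m C *m (1%:M + X))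
     <= ((1 + opnorm Dm) ^+ h - 1) * opnorm C * (1 + opnorm X).
    apply: le_trans (op_mul3 _ _ _) _.
    apply: ler_pM; rewrite ?mulr_ge0 ?op_ge0 //.
      by apply: ler_pM; rewrite ?op_ge0 // pow_diff.
    by apply: le_trans (op_add _ _) _; rewrite lerD2r op_1.
  have t2 : opnorm (mxpow B h *m C *m X) <= opnorm C * opnorm X.
    apply: le_trans (op_mul3 _ _ _) _; rewrite ler_wpM2r // -[X in _ <= X]mul1r.
    by rewrite ler_wpM2r // op_pow.
  apply: le_trans (lerD t1 t2) _.
  set p := (1 + opnorm Dm) ^+ h; rewrite le_eqVlt; apply/orP; left; apply/eqP; ring.
apply: le_trans (CS _ _) _.
have -> : vnorm a * opnorm C * vnorm b * ((1 + opnorm Dm) ^+ h * (1 + opnorm X) - 1)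
  = vnorm a * (opnorm C * ((1 + opnorm Dm) ^+ h * (1 + opnorm X) - 1) * vnorm b) by ring.
rewrite ler_wpM2l ?vnorm_ge0 //; apply: le_trans (op_bound _ _) _.
by rewrite ler_wpM2r ?vnorm_ge0.
Qed.

Lemma kappa_bound {R : rcfType} n (Sh Si Ph Pi Sigp : 'M[R]_n) :
  Sh^T = Sh -> Si^T = Si -> Ph^T = Ph -> Pi^T = Pi ->
  Si *m Sh = 1%:M -> Ph *m Ph = Sigp -> Pi *m Pi = invmx Sigp -> Sigp \in unitmx ->
  opnorm (Ph *m Si) * opnorm (Sh *m Pi) <= Num.sqrt (cond (Si *m Sigp *m Si)).
Proof.
move=> ShT SiT PhT PiT SiSh PhPh PiPi Spu.
set W := Si *m Sigp *m Si.
have WI : invmx W = Sh *m invmx Sigp *m Sh.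
  apply: inv_uniq; rewrite /W !mulmxA -(mulmxA _ Si Sh) SiSh mulmx1 mulmxK //.
have c1 : opnorm (Ph *m Si) <= Num.sqrt (opnorm W).
  apply: le_trans (op_sq _) _; rewrite trmx_mul SiT PhT mulmxA -(mulmxA Si) PhPh.
  by [].
have c2 : opnorm (Sh *m Pi) <= Num.sqrt (opnorm (invmx W)).
  have := op_tr (Sh *m Pi)^T; rewrite trmxK => h; apply: le_trans h _.
  apply: le_trans (op_sq _) _; rewrite trmxK !trmx_mul PiT ShT mulmxA -(mulmxA Sh) PiPi WI.
  by [].
rewrite /cond sqrtrM ?op_ge0 //; apply: ler_pM; rewrite ?op_ge0 //.
Qed.

Lemma nuT {R : rcfType} n (M : 'M[R]_n) nu0 h : (nu_h M nu0 h)^T = nu0^T *m mxpow M h.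
Proof. by rewrite /nu_h trmx_mul mxpow_tr. Qed.

Unset Implicit Arguments.
Theorem lemma7 (R : rcfType) (d N H : nat) (S A : Type)
  (phi : S -> A -> 'cV[R]_d) (phipi : S -> 'cV[R]_d)
  (Q : nat -> S -> A -> R) (V : nat -> S -> R)
  (s : 'I_N -> S) (a : 'I_N -> A) (s' : 'I_N -> S) (r : 'I_N -> R)
  (lam : R) (Mpi Sigma Sigmapi : 'M[R]_d) (nu0 : 'cV[R]_d) :
  (0 < N)%N ->
  0 <= lam ->
  (forall x, V H.+1 x = 0) ->
  posdef Sigma -> posdef Sigmapi ->
  Sigma_hat phi s a lam \in unitmx ->
  opnorm (msqrt Sigmapi *m Mpi *m msqrtinv Sigmapi) <= 1 ->
  let DX := DeltaX phi s a lam Sigma in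
  let DM := DeltaM phi phipi s a s' lam Mpi in
  let DY := DeltaY phi phipi s a s' Sigma Mpi in
  let kappa1 := cond (msqrtinv Sigma *m Sigmapi *m msqrtinv Sigma) in
  let x := opnorm (msqrt Sigma *m DX *m msqrt Sigma) in
  let m := opnorm (msqrt Sigmapi *m DM *m msqrtinv Sigmapi) in
  let y := opnorm (msqrtinv Sigma *m DY *m msqrtinv Sigma) in
  let e := opnorm (N%:R^-1 *: (msqrtinv Sigma *m Sigma_hat phi s a lam
                                 *m msqrtinv Sigma) - 1%:M) in
  (* (1) *)
  `| E2 phi phipi s a s' r lam Sigma Mpi nu0 Q V H |
    <= \sum_(h < H.+1)
         Num.sqrt ((nu0^T *m invmx Sigmapi *m nu0) 0 0)
         * opnorm (msqrt Sigmapi *m msqrtinv Sigma)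
         * vnorm (msqrtinv Sigma *m DeltaW phi s a s' r Q V h)
         * ((1 + m) ^+ h * (1 + x) - 1)
  (* (2) *)
  /\ m <= Num.sqrt kappa1 * ((1 + x) * (1 + y) - 1)
  (* (3) *)
  /\ (e <= 2^-1 -> x <= 2 * e).
Proof.
move=> N0 lam0 _ Spd Ppd Shu Bop DX DM DY kappa1 x m y e.
have [ShT ShSh SiT [SiSh ShSi] SiSi] := sqrt_facts Spd.
have [PhT PhPh PiT [PiPh PhPi] PiPi] := sqrt_facts Ppd.
have Su := posdef_unit Spd; have Spu := posdef_unit Ppd.
set Sh := msqrt Sigma in ShT ShSh SiT SiSh ShSi SiSi x y e *.
set Si := msqrtinv Sigma in ShT ShSh SiT SiSh ShSi SiSi x y e kappa1 *.
set Ph := msqrt Sigmapi in PhT PhPh PiT PiPh PhPi PiPi m Bop *.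
set Pi := msqrtinv Sigmapi in PhT PhPh PiT PiPh PhPi PiPi m Bop *.
set Shat := Sigma_hat phi s a lam in Shu e *.
set Nr : R := N%:R in e *.
have Nr0 : Nr != 0 by rewrite pnatr_eq0 -lt0n.
set cross := cross_sum phi phipi s a s'.
have DXd : DX = Nr *: invmx Shat - invmx Sigma := erefl.
have DMd : DM = M_hat phi phipi s a s' lam - Mpi := erefl.
have DYd : DY = Nr^-1 *: cross - Sigma *m Mpi := erefl.
clearbody DX DM DY.
have cSS : forall k (Z : 'M[R]_(k, d)), Z *m Si *m Sh = Z.
  by move=> k Z; rewrite -mulmxA SiSh mulmx1.
have cHS : forall k (Z : 'M[R]_(k, d)), Z *m Sh *m Si = Z.
  by move=> k Z; rewrite -mulmxA ShSi mulmx1.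
have cPP : forall k (Z : 'M[R]_(k, d)), Z *m Pi *m Ph = Z.
  by move=> k Z; rewrite -mulmxA PiPh mulmx1.
have cHP : forall k (Z : 'M[R]_(k, d)), Z *m Ph *m Pi = Z.
  by move=> k Z; rewrite -mulmxA PhPi mulmx1.
set X := Sh *m DX *m Sh in x *.
have Xd : X = Sh *m DX *m Sh := erefl.
clearbody X.
have NS : Nr *: invmx Shat = invmx Sigma + DX by rewrite DXd addrC subrK.
have DXe : DX = Si *m X *m Si by rewrite Xd !mulmxA SiSh mul1mx cHS.
have NS2 : Nr *: invmx Shat = Si *m (1%:M + X) *m Si.
  by rewrite mulmxDr mulmxDl mulmx1 SiSi -DXe.
split; last first; [split|].
-
  have crossE : cross = Nr *: (Sigma *m Mpi + DY).
    by rewrite DYd addrC subrK scalerA mulfV // scale1r.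
  have MhE : M_hat phi phipi s a s' lam = (invmx Sigma + DX) *m (Sigma *m Mpi + DY).
    by rewrite /M_hat -/Shat -/cross crossE -scalemxAr scalemxAl NS.
  have DME : DM = invmx Sigma *m DY + DX *m (Sigma *m Mpi) + DX *m DY.
    rewrite DMd MhE mulmxDl !mulmxDr (mulmxA (invmx Sigma)) mulVmx // mul1mx.
    by rewrite addrAC [Mpi + _]addrC addrK addrA.
  have DmE : Ph *m DM *m Pi = (Ph *m Si) *m (Si *m DY *m Si) *m (Sh *m Pi)
        + (Ph *m Si) *m X *m (Sh *m Pi) *m (Ph *m Mpi *m Pi)
        + (Ph *m Si) *m X *m (Si *m DY *m Si) *m (Sh *m Pi).
    rewrite DME !mulmxDr !mulmxDl -SiSi -{1}ShSh Xd !mulmxA !cSS !cHS !cPP.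
    done.
  apply: (part2 DmE Bop).
  exact: kappa_bound ShT SiT PhT PiT SiSh PhPh PiPi Spu.
-
  move=> e2; apply: (part3 _ e2).
  have IE : 1%:M + (Nr^-1 *: (Si *m Shat *m Si) - 1%:M) = Nr^-1 *: (Si *m Shat *m Si).
    by rewrite addrC subrK.
  have IX : 1%:M + X = Nr *: (Sh *m invmx Shat *m Sh).
    by rewrite scalemxAl scalemxAr NS2 !mulmxA ShSi mul1mx cSS.
  rewrite IE IX -scalemxAl -scalemxAr scalerA mulVf // scale1r.
  by rewrite !mulmxA cSS mulmxK // SiSh.
-
  pose B := Ph *m Mpi *m Pi.
  pose Dm := Ph *m DM *m Pi.
  have MpiE : Mpi = Pi *m B *m Ph by rewrite /B !mulmxA PiPh mul1mx cPP.
  have MhE : M_hat phi phipi s a s' lam = Pi *m (B + Dm) *m Ph.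
    rewrite mulmxDr mulmxDl -MpiE /Dm !mulmxA PiPh mul1mx cPP DMd.
    by rewrite addrC subrK.
  have key : forall h, `| ((Nr *: ((nu_h (M_hat phi phipi s a s' lam) nu0 h)^T *m invmx Shat)
       - (nu_h Mpi nu0 h)^T *m invmx Sigma) *m DeltaW phi s a s' r Q V h) 0 0 |
     <= Num.sqrt ((nu0^T *m invmx Sigmapi *m nu0) 0 0) * opnorm (Ph *m Si)
         * vnorm (Si *m DeltaW phi s a s' r Q V h) * ((1 + m) ^+ h * (1 + x) - 1).
    move=> h; set w := DeltaW phi s a s' r Q V h.
    have eq1 : ((Nr *: ((nu_h (M_hat phi phipi s a s' lam) nu0 h)^T *m invmx Shat)
       - (nu_h Mpi nu0 h)^T *m invmx Sigma) *m w) 0 0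
     = dotr (Pi *m nu0) ((mxpow (B + Dm) h *m (Ph *m Si) *m (1%:M + X)
                          - mxpow B h *m (Ph *m Si)) *m (Si *m w)).
      rewrite !nuT /dotr trmx_mul PiT; congr (_ 0 0).
      rewrite scalemxAr NS2 MhE (mxpow_conj _ _ PiPh PhPi).
      rewrite {1}MpiE (mxpow_conj _ _ PiPh PhPi) -SiSi.
      by rewrite !mulmxBl !mulmxBr !mulmxA.
    rewrite eq1; apply: le_trans (@part1 _ _ (Pi *m nu0) (Si *m w) B Dm (Ph *m Si) X h Bop) _.
    rewrite vnormE /dotr trmx_mul PiT mulmxA -(mulmxA _ Pi Pi) PiPi.
    exact: lexx.
  rewrite /E2; apply: le_trans (ler_norm_sum _ _ _) _; apply: ler_sum => h _.
  exact: key.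
Qed.
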